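(* Let $d\colon A\to B$ be a homomorphism of abelian groups. The ring homomorphism $q\colon Q(d)\to\operatorname{End}(d)$ restricts to an isomorphism of partially ordered sets $\operatorname{Id}_0(d)\xrightarrow{\sim}\operatorname{Prj}(d)$ that respects the action of $\operatorname{Aut}(d)$. Its inverse sends $e=(e_A,e_B)\in\operatorname{Prj}(d)$ to the homomorphism $B=\ker(e_B)\oplus\operatorname{im}(e_B)\to A$ that is zero on $\ker(e_B)$ and on $\operatorname{im}(e_B)$ equals the inverse of the isomorphism $\operatorname{im}(e_A)\to\operatorname{im}(e_B)$ obtained by restricting $d$.
   Context: $\operatorname{End}(d)$ is the ring of pairs $(\alpha,\beta)\in\operatorname{End}(A)\times\operatorname{End}(B)$ with $\beta d=d\alpha$ (componentwise operations); $\operatorname{Aut}(d)$ is its unit group. $Q(d)=\mathbb{Z}\oplus\operatorname{Hom}(B,A)$ is the ring with multiplication $(m,f)\star(n,g)=(mn,\,mg+nf+f\circ d\circ g)$ and unit $(1,0)$; $q\colon Q(d)\to\operatorname{End}(d)$ is the ring homomorphism sending $1$ to the identity and $f\in\operatorname{Hom}(B,A)$ to $(f\circ d,\,d\circ f)$. $\operatorname{Id}_0(d)=\{f\in\operatorname{Hom}(B,A): f d f=f\}$, partially ordered by $f\leq g$ iff $f\star g=g\star f=f$. For an idempotent $e=(e_A,e_B)\in\operatorname{End}(d)$, $\operatorname{im}(e)$ denotes the restriction $\operatorname{im}(e_A)\to\operatorname{im}(e_B)$ of $d$; $\operatorname{Prj}(d)$ is the set of idempotents $e\in\operatorname{End}(d)$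 for which $\operatorname{im}(e)$ is an isomorphism, partially ordered by $e\leq e'$ iff $ee'=e'e=e$. $\operatorname{Aut}(d)$ acts on $\operatorname{Prj}(d)$ by conjugation and on $\operatorname{Id}_0(d)$ by $(\alpha,\beta)\cdot f=\alpha\circ f\circ\beta^{-1}$. *)

(* Defs.v *)
(* Abelian groups are zmodTypes; homomorphisms are plain
   functions together with the explicit homomorphism property [is_hom]. *)
From mathcomp Require Import all_boot all_algebra.
Set Implicit Arguments. Unset Strict Implicit. Unset Printing Implicit Defensive.
Import GRing.Theory.
Local Open Scope ring_scope.

Section Defs.
Variables (A B : zmodType) (d : A -> B).

Definition is_hom (U V : zmodType) (f : U -> V) : Prop :=
  forall x y, f (x - y) = f x - f y.

(* elements of End(A) x End(B) are pairs of functions *)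
Definition endpair := ((A -> A) * (B -> B))%type.

Definition in_End (e : endpair) : Prop :=
  [/\ is_hom e.1, is_hom e.2 & forall a, e.2 (d a) = d (e.1 a)].

Definition eqEnd (e e' : endpair) : Prop := e.1 =1 e'.1 /\ e.2 =1 e'.2.
Definition mulEnd (e e' : endpair) : endpair := (e.1 \o e'.1, e.2 \o e'.2).
Definition oneEnd : endpair := (id, id).

Definition inv_in_End (u u' : endpair) : Prop :=
  [/\ in_End u, in_End u', eqEnd (mulEnd u u') oneEnd & eqEnd (mulEnd u' u) oneEnd].
Definition in_Aut (u : endpair) : Prop := exists u', inv_in_End u u'.

Definition Qelt := (int * (B -> A))%type.
Definition in_Q (x : Qelt) : Prop := is_hom x.2.
Definition eqQ (x y : Qelt) : Prop := x.1 = y.1 /\ x.2 =1 y.2.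
Definition starQ (x y : Qelt) : Qelt :=
  (x.1 * y.1, fun b => (y.2 b) *~ x.1 + (x.2 b) *~ y.1 + x.2 (d (y.2 b))).
Definition oneQ : Qelt := (1, fun _ => 0).
Definition inQ (f : B -> A) : Qelt := (0, f).

Definition q (x : Qelt) : endpair :=
  (fun a => a *~ x.1 + x.2 (d a), fun b => b *~ x.1 + d (x.2 b)).

Definition Id0 (f : B -> A) : Prop := is_hom f /\ forall b, f (d (f b)) = f b.
Definition leId (f g : B -> A) : Prop :=
  eqQ (starQ (inQ f) (inQ g)) (inQ f) /\ eqQ (starQ (inQ g) (inQ f)) (inQ f).

Definition in_im (U : Type) (h : U -> U) (u : U) : Prop := exists x, h x = u.

(* im(e) : im(e_A) -> im(e_B), the restriction of d, is an isomorphism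
   (it is well defined since e_B d = d e_A); bijectivity is stated
   directly: injective on im(e_A) and onto im(e_B). *)
Definition im_iso (e : endpair) : Prop :=
  (forall a a', in_im e.1 a -> in_im e.1 a' -> d a = d a' -> a = a') /\
  (forall b, in_im e.2 b -> exists2 a, in_im e.1 a & d a = b).

Definition idempotentE (e : endpair) : Prop := eqEnd (mulEnd e e) e.
Definition Prj (e : endpair) : Prop := [/\ in_End e, idempotentE e & im_iso e].
Definition lePrj (e e' : endpair) : Prop :=
  eqEnd (mulEnd e e') e /\ eqEnd (mulEnd e' e) e.

(* u = (alpha,beta) with inverse u' = (alpha^-1, beta^-1) *)
Definition act_Prj (u u' e : endpair) : endpair := mulEnd (mulEnd u e) u'.
Definition act_Id0 (u u' : endpair) (f : B -> A) : B -> A :=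
  u.1 \o f \o u'.2.

End Defs.

(* Main.v *)
Require Import Defs.
From mathcomp Require Import all_boot all_algebra.
From Stdlib Require Import ClassicalEpsilon.
Import GRing.Theory.
Local Open Scope ring_scope.

Lemma hom0 (U V : zmodType) (f : U -> V) : is_hom f -> f 0 = 0.
Proof. by move=> hf; rewrite -(subrr 0) hf subrr. Qed.

Lemma homN (U V : zmodType) (f : U -> V) : is_hom f -> forall x, f (- x) = - f x.
Proof. by move=> hf x; rewrite -sub0r hf hom0 // sub0r. Qed.

Lemma homC (U V W : zmodType) (f : V -> W) (g : U -> V) :
  is_hom f -> is_hom g -> is_hom (f \o g).
Proof. by move=> hf hg x y /=; rewrite hg hf. Qed.

Lemma qE (A B : zmodType) (d : A -> B) f :
  q d (inQ f) = (fun a => a *~ 0 + f (d a), fun b => b *~ 0 + d (f b)).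
Proof. by []. Qed.

Theorem proposition4p6 (A B : zmodType) (d : A -> B) (hd : is_hom d) :
  (* q restricts to a map Id_0(d) -> Prj(d) *)
  (forall f, Id0 d f -> Prj d (q d (inQ f))) /\
  (* injective *)
  (forall f g, Id0 d f -> Id0 d g ->
     eqEnd (q d (inQ f)) (q d (inQ g)) -> f =1 g) /\
  (* surjective *)
  (forall e, Prj d e -> exists2 f, Id0 d f & eqEnd (q d (inQ f)) e) /\
  (* order isomorphism *)
  (forall f g, Id0 d f -> Id0 d g ->
     (leId d f g <-> lePrj (q d (inQ f)) (q d (inQ g)))) /\
  (* equivariance for the action of Aut(d) *)
  (forall u u' f, inv_in_End d u u' -> Id0 d f ->
     Id0 d (act_Id0 u u' f) /\
     eqEnd (q d (inQ (act_Id0 u u' f))) (act_Prj u u' (q d (inQ f)))) /\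
  (* description of the inverse *)
  (forall e f, Prj d e -> Id0 d f -> eqEnd (q d (inQ f)) e ->
     (forall b, e.2 b = 0 -> f b = 0) /\
     (forall b, in_im e.2 b -> in_im e.1 (f b) /\ d (f b) = b)).
Proof.
split.
  move=> f [hf fdf]; rewrite qE; split.
  - split => /=.
    + by move=> x y; rewrite !mulr0z !add0r hd hf.
    + by move=> x y; rewrite !mulr0z !add0r hf hd.
    + by move=> a; rewrite !mulr0z !add0r.
  - by split=> x /=; rewrite !mulr0z !add0r ?fdf.
  - split => /=.
    + move=> a a' [x <-] [x' <-]; rewrite !mulr0z !add0r => E.
      by rewrite -fdf E fdf.
    + move=> b [x <-]; exists (f x); last by rewrite mulr0z add0r.
      by exists (f x); rewrite mulr0z add0r fdf.
split.
  move=> f g [hf fdf] [hg gdg]; rewrite !qE => -[/= E1 E2] b.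
  have e1 : forall a, f (d a) = g (d a).
    by move=> a; have := E1 a; rewrite !mulr0z !add0r.
  have e2 : forall b, d (f b) = d (g b).
    by move=> b'; have := E2 b'; rewrite !mulr0z !add0r.
  by rewrite -fdf e1 e2 gdg.
split.
  move=> e [[he1 he2 comm] [id1 id2] [inj sur]].
  have ex : forall b, exists a, in_im e.1 a /\ d a = e.2 b.
    move=> b; have [|a Ha Hd] := sur (e.2 b); first by exists b.
    by exists a.
  have uniq : forall b a a', in_im e.1 a /\ d a = e.2 b ->
      in_im e.1 a' /\ d a' = e.2 b -> a = a'.
    by move=> b a a' [Ha Hd] [Ha' Hd']; apply: inj => //; rewrite Hd Hd'.
  have imB : forall x y, in_im e.1 x -> in_im e.1 y -> in_im e.1 (x - y).
    by move=> x y [u <-] [v <-]; exists (u - v); rewrite he1.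
  have im1 : forall a, in_im e.1 (e.1 a) by move=> a; exists a.
  have fix1 : forall a, in_im e.1 a -> e.1 a = a.
    by move=> a [x <-]; apply: id1.
  pose f b := proj1_sig (constructive_indefinite_description _ (ex b)).
  have fP : forall b, in_im e.1 (f b) /\ d (f b) = e.2 b.
    by move=> b; rewrite /f; case: constructive_indefinite_description.
  exists f.
    split.
      move=> x y; apply: (uniq (x - y)); first exact: (fP (x - y)).
      split; first by apply: imB; [exact: (proj1 (fP x)) | exact: (proj1 (fP y))].
      by rewrite hd he2 !(proj2 (fP _)).
    move=> b; apply: (uniq (d (f b))); first exact: (fP (d (f b))).
    split; first exact: (proj1 (fP b)).
    by rewrite comm fix1 //; exact: (proj1 (fP b)).
  split=> x /=; rewrite mulr0z add0r; last exact: (proj2 (fP x)).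
  apply: (uniq (d x)); first exact: (fP (d x)).
  by split; [apply: im1 | rewrite comm].
split.
  move=> f g [hf fdf] [hg gdg]; rewrite /leId /lePrj /eqQ /eqEnd !qE /=.
  split.
    move=> [[_ E1] [_ E2]].
    have e1 : forall b, f (d (g b)) = f b.
      by move=> b; have := E1 b; rewrite !mulr0z !add0r.
    have e2 : forall b, g (d (f b)) = f b.
      by move=> b; have := E2 b; rewrite !mulr0z !add0r.
    by split; split=> x /=; rewrite !mulr0z !add0r ?e1 ?e2.
  move=> [[E1 E2] [E3 E4]].
  have e2 : forall b, d (f (d (g b))) = d (f b).
    by move=> b; have := E2 b; rewrite /= !mulr0z !add0r.
  have e3 : forall a, g (d (f (d a))) = f (d a).
    by move=> a; have := E3 a; rewrite /= !mulr0z !add0r.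
  split; (split; first by rewrite !mulr0); move=> b /=; rewrite !mulr0z !add0r.
    by rewrite -[in RHS]fdf -e2 fdf.
  by rewrite -fdf e3.
split.
  move=> [al be] [al' be'] f [[ha hb cu] [ha' hb' cu'] [I1 I2] [I3 I4]] [hf fdf].
  rewrite /= in cu cu' I1 I2 I3 I4 *.
  have key : forall x, be' (d (al x)) = d x by move=> x; rewrite cu'; congr (d _); exact: I3.
  split.
    split; first by apply: homC => //; apply: homC.
    by move=> b; rewrite /act_Id0 /= key fdf.
  rewrite /act_Id0 /act_Prj /mulEnd !qE; split=> x /=; rewrite !mulr0z !add0r.
    by rewrite cu'.
  by rewrite cu.
move=> e f _ [hf fdf] [E1 E2]; rewrite qE /= in E1 E2.
split.
  move=> b; rewrite -E2 mulr0z add0r => H.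
  by rewrite -fdf H hom0.
move=> b [x <-]; rewrite -!E2 !mulr0z !add0r; split.
  by exists (f x); rewrite -E1 mulr0z add0r fdf.
by rewrite fdf.
Qed.
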